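(* Let $\boldsymbol{\pi}$ be any joint policy (written in conditional form as below). Then $$ J(\boldsymbol{\pi}_* ) - J(\boldsymbol{\pi}) = \frac{1}{1-\gamma} \sum_{m=1}^N \mathbb{E}_{s \sim \nu_*,\ \mathbf{a}^{1:m-1} \sim \boldsymbol{\pi}_*^{1:m-1}(\cdot|s)}\Big\langle Q_{\boldsymbol{\pi}}^{1:m}(s, \mathbf{a}^{1:m-1}, \cdot),\ \pi_*^m(\cdot|s,\mathbf{a}^{1:m-1}) - \pi^m(\cdot|s, \mathbf{a}^{1:m-1}) \Big\rangle, $$ where the inner product is over $a^m \in \mathcal{A}$.
   Context: A fully cooperative Markov game is a tuple $(\mathcal{N},\mathcal{S},\mathcal{A}^N,\mathcal{P},r,\gamma)$ with agents $\mathcal{N}=\{1,\dots,N\}$, finite state space $\mathcal{S}$, finite individual action space $\mathcal{A}$ (joint action space $\mathcal{A}^N$), transition kernel $\mathcal{P}(\cdot|s,\mathbf{a})$, common reward $r:\mathcal{S}\times\mathcal{A}^N\to[0,1]$ and discount $\gamma\in[0,1)$. For a set of agents $P$, $\mathbf{a}^P$ is their joint action; $\mathbf{a}^{1:m}=(a^1,\dots,a^m)$. Joint policies are written in sequential conditional form $\boldsymbol{\pi}(\mathbf{a}|s)=\prod_{m=1}^N \pi^m(a^m|s,\mathbf{a}^{1:m-1})$, and $\boldsymbol{\pi}^{1:m}(\cdot|s)$ denotes the induced distribution of $\mathbf{a}^{1:m}$. $V_{\boldsymbol{\pi}}(s)$ and $Q_{\boldsymbol{\pi}}(s,\mathbf{a})$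 are the usual discounted value and action-value functions. The multi-agent action value function of agents $1:m$ is $Q^{1:m}_{\boldsymbol{\pi}}(s,\mathbf{a}^{1:m})=\mathbb{E}_{\tilde{\mathbf{a}}}\,Q_{\boldsymbol{\pi}}(s,\mathbf{a}^{1:m},\tilde{\mathbf{a}})$, where $\tilde{\mathbf{a}}=\mathbf{a}^{m+1:N}$ is drawn from $\boldsymbol{\pi}$ (the remaining agents follow $\boldsymbol{\pi}$). $\boldsymbol{\pi}_*$ denotes an optimal joint policy and $\nu_*$ its stationary state distribution; the objective is $J(\boldsymbol{\pi})=\mathbb{E}_{s\sim\nu_*}V_{\boldsymbol{\pi}}(s)$. *)

(* Defs.v *)
From mathcomp Require Import all_boot all_order all_algebra.
From mathcomp Require Import all_classical all_reals all_analysis.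
Set Implicit Arguments. Unset Strict Implicit. Unset Printing Implicit Defensive.
Import Order.TTheory GRing.Theory Num.Theory.
Local Open Scope ring_scope.

Section MG.
Variables (R : realType) (S A : finType) (N : nat).

Definition jact := {ffun 'I_N -> A}.

(* a^{1:m} for m : 'I_N is the prefix of the first m agents (0-indexed: 0..m-1) *)
Definition prefix (m : 'I_N) (a : jact) : m.-tuple A :=
  [tuple a (widen_ord (ltnW (ltn_ord m)) i) | i < m].

(* a joint policy in sequential conditional form:
   pol m s b x = pi^m(x | s, b) where b is the joint action of the previous agents *)
Definition cpolicy := forall m : 'I_N, S -> m.-tuple A -> A -> R.

Definition valid_policy (pol : cpolicy) : Prop :=
  forall m s b, (forall x, 0 <= pol m s b x) /\ \sum_x pol m s b x = 1.

Definition joint (pol : cpolicy) (s : S) (a : jact) : R :=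
  \prod_(m < N) pol m s (prefix m a) (a m).

Definition marg (pol : cpolicy) (s : S) (m : 'I_N) (b : m.-tuple A) : R :=
  \sum_(a : jact | prefix m a == b) joint pol s a.

Variables (P : S -> jact -> S -> R) (r : S -> jact -> R) (gamma : R).

Definition is_kernel : Prop :=
  forall s a, (forall s', 0 <= P s a s') /\ \sum_s' P s a s' = 1.

Definition Ppol (pol : cpolicy) (s s' : S) : R := \sum_a joint pol s a * P s a s'.
Definition rpol (pol : cpolicy) (s : S) : R := \sum_a joint pol s a * r s a.

Fixpoint rstep (pol : cpolicy) (t : nat) (s : S) : R :=
  match t with
  | 0 => rpol pol s
  | t'.+1 => \sum_s' Ppol pol s s' * rstep pol t' s'
  end.

Definition V (pol : cpolicy) (s : S) : R :=
  limn (fun n => \sum_(0 <= t < n) gamma ^+ t * rstep pol t s).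

Definition Q (pol : cpolicy) (s : S) (a : jact) : R :=
  r s a + gamma * \sum_s' P s a s' * V pol s'.

(* multi-agent action value of agents 0..m (1:m+1 in 1-indexed notation):
   Qm pol s m b x = Q^{1:m+1}_pi(s, b, x), the remaining agents k > m
   drawn sequentially from pol. *)
Definition Qm (pol : cpolicy) (s : S) (m : 'I_N) (b : m.-tuple A) (x : A) : R :=
  \sum_(a : jact | (prefix m a == b) && (a m == x))
     (\prod_(k < N | (m < k)%N) pol k s (prefix k a) (a k)) * Q pol s a.

Definition optimal (pol : cpolicy) : Prop :=
  valid_policy pol /\ forall pol', valid_policy pol' -> forall s, V pol' s <= V pol s.

Definition stationary (pol : cpolicy) (nu : S -> R) : Prop :=
  (forall s, 0 <= nu s) /\ \sum_s nu s = 1 /\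
  forall s', nu s' = \sum_s nu s * Ppol pol s s'.

Definition J (nu : S -> R) (pol : cpolicy) : R := \sum_s nu s * V pol s.

End MG.

(* Main.v *)
Require Import Defs.
From mathcomp Require Import all_boot all_order all_algebra.
From mathcomp Require Import all_classical all_reals all_analysis.
Import Order.TTheory GRing.Theory Num.Theory.
Local Open Scope ring_scope.
From mathcomp Require Import ring lra.
Import numFieldNormedType.Exports.
Set Implicit Arguments. Unset Strict Implicit. Unset Printing Implicit Defensive.

Local Notation prefix := Defs.prefix.
Section Aux.
Variables (R : realType) (S A : finType) (N : nat).

Lemma prefix_eqP (m : 'I_N) (a a' : jact A N) :
  prefix m a = prefix m a' <-> (forall i : 'I_N, (i < m)%N -> a i = a' i).
Proof.
split.
- move=> E i lim.
  have := congr1 (fun t => tnth t (Ordinal lim)) E.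
  rewrite /prefix !tnth_mktuple.
  by have -> : widen_ord (ltnW (ltn_ord m)) (Ordinal lim) = i by apply: val_inj.
- move=> H; apply: eq_from_tnth => j; rewrite !tnth_mktuple; apply: H.
  by rewrite /= ltn_ord.
Qed.

Lemma tail_sum (pol : cpolicy R S A N) (s : S) : valid_policy pol ->
  forall d j, (j + d = N)%N -> forall c : jact A N,
  \sum_(a : jact A N | [forall i : 'I_N, (i < j)%N ==> (a i == c i)])
     \prod_(k < N | (j <= k)%N) pol k s (prefix k a) (a k) = 1.
Proof.
move=> vp; elim=> [|d IH] j hj c.
  rewrite addn0 in hj; subst j.
  rewrite (big_pred1 c); last first.
    move=> a /=; apply/forallP/eqP => [H|-> i]; last by rewrite eqxx implybT.
    by apply/ffunP => i; have := H i; rewrite ltn_ord /= => /eqP.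
  by rewrite big_pred0 // => k; rewrite leqNgt ltn_ord.
have hjN : (j < N)%N by rewrite -hj addnS ltnS leq_addr.
set jo : 'I_N := Ordinal hjN.
rewrite (partition_big (fun a : jact A N => a jo) predT) //=.
transitivity (\sum_(x : A) pol jo s (prefix jo c) x * 1); last first.
  under eq_bigr do rewrite mulr1.
  by case: (vp jo s (prefix jo c)).
apply: eq_bigr => x _.
rewrite -[X in _ * X](IH j.+1 _ [ffun i => if i == jo then x else c i]); last by rewrite addSnnS.
rewrite big_distrr /=.
apply: eq_big => [a|a].
  apply/andP/forallP => [[/forallP H /eqP ax] i | H].
    rewrite ffunE; case: (ltngtP i j) => hi.
    - have -> : (i == jo) = false by apply/negbTE; rewrite -val_eqE /= neq_ltn hi.
      by rewrite ltnS (ltnW hi) /=; exact: (implyP (H i) hi).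
    - by rewrite ltnS leqNgt hi.
    - have -> : i = jo by apply: val_inj.
      by rewrite eqxx ax eqxx implybT.
  split.
    apply/forallP => i; apply/implyP => hi.
    have := H i; rewrite ffunE ltnS (ltnW hi) /=.
    have -> // : (i == jo) = false by apply/negbTE; rewrite -val_eqE /= neq_ltn hi.
  by have := H jo; rewrite ffunE eqxx /= ltnSn.
move=> /andP[/forallP H /eqP ax].
rewrite (bigD1 jo) /=; last by rewrite leqnn.
congr (_ * _).
  rewrite ax; congr (pol _ _ _ _); apply/prefix_eqP => i hi; apply/eqP.
  by have := H i; rewrite hi.
apply: eq_bigl => k.
by rewrite [RHS]ltn_neqAle andbC -val_eqE /= eq_sym.
Qed.


Lemma jact_inhabited (pol : cpolicy R S A N) (s : S) :
  valid_policy pol -> exists c : jact A N, True.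
Proof.
move=> vp; case: (pickP A) => [x _|A0]; first by exists [ffun=> x].
suff F : 'I_N -> False by exists [ffun i => match F i with end].
move=> i; pose m0 : 'I_N := Ordinal (leq_ltn_trans (leq0n i) (ltn_ord i)).
case: (vp m0 s (@nil_tuple A)) => _; rewrite big_pred0 //.
by move/eqP; rewrite eq_sym oner_eq0.
Qed.

Lemma joint_sum1 (pol : cpolicy R S A N) (s : S) :
  valid_policy pol -> \sum_a joint pol s a = 1.
Proof.
move=> vp; case: (jact_inhabited s vp) => c _.
rewrite -(tail_sum s vp (add0n N) c).
apply: eq_big => [a|a _]; first by apply/esym/forallP => i.
by apply: eq_bigl.
Qed.

Lemma joint_ge0 (pol : cpolicy R S A N) (s : S) a :
  valid_policy pol -> 0 <= joint pol s a.
Proof.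
move=> vp; apply: prodr_ge0 => k _; by case: (vp k s (prefix k a)).
Qed.

Lemma marg_pref (pol : cpolicy R S A N) (s : S) (m : 'I_N) (a : jact A N) :
  valid_policy pol ->
  \sum_(a' | prefix m a' == prefix m a) joint pol s a' =
  \prod_(k < N | (k < m)%N) pol k s (prefix k a) (a k).
Proof.
move=> vp.
rewrite (eq_bigl (fun a' : jact A N => [forall i : 'I_N, (i < m)%N ==> (a' i == a i)])); last first.
  move=> a'; apply/eqP/forallP => [/prefix_eqP H i | H].
    by apply/implyP => /H ->.
  by apply/prefix_eqP => i /(implyP (H i)) /eqP.
transitivity (\sum_(a' : jact A N | [forall i : 'I_N, (i < m)%N ==> (a' i == a i)])
   (\prod_(k < N | (k < m)%N) pol k s (prefix k a) (a k)) *
   \prod_(k < N | (m <= k)%N) pol k s (prefix k a') (a' k)).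
  apply: eq_bigr => a' /forallP H.
  rewrite /joint (bigID (fun k : 'I_N => (k < m)%N)) /=; congr (_ * _).
    apply: eq_bigr => k hk.
    have -> : a' k = a k by apply/eqP; exact: (implyP (H k) hk).
    congr (pol _ _ _ _); apply/prefix_eqP => i hi; apply/eqP.
    exact: (implyP (H i) (ltn_trans hi hk)).
  by apply: eq_bigl => k; rewrite -leqNgt.
by rewrite -big_distrr /= (tail_sum s vp (subnKC (ltnW (ltn_ord m))) a) mulr1.
Qed.


Lemma term_eq (pistar pol p : cpolicy R S A N) (s : S) (m : 'I_N) (Qf : jact A N -> R) :
  valid_policy pistar ->
  \sum_(b : m.-tuple A) marg pistar s b *
     \sum_(x : A) (\sum_(a : jact A N | (prefix m a == b) && (a m == x))
        (\prod_(k < N | (m < k)%N) pol k s (prefix k a) (a k)) * Qf a) * p m s b x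
  = \sum_(a : jact A N) (\prod_(k < N | (k < m)%N) pistar k s (prefix k a) (a k)) *
       (p m s (prefix m a) (a m) * ((\prod_(k < N | (m < k)%N) pol k s (prefix k a) (a k)) * Qf a)).
Proof.
move=> vp.
pose W a := (\prod_(k < N | (m < k)%N) pol k s (prefix k a) (a k)) * Qf a.
pose G (b : m.-tuple A) := \sum_(a : jact A N | prefix m a == b) p m s b (a m) * W a.
transitivity (\sum_(b : m.-tuple A) marg pistar s b * G b).
  apply: eq_bigr => b _; congr (_ * _).
  rewrite /G [RHS](partition_big (fun a : jact A N => a m) predT) //=.
  apply: eq_bigr => x _; rewrite big_distrl /=.
  by apply: eq_bigr => a /andP[_ /eqP ->]; rewrite mulrC.
transitivity (\sum_(a' : jact A N) joint pistar s a' * G (prefix m a')).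
  rewrite [RHS](partition_big (fun a' : jact A N => prefix m a') predT) //=.
  apply: eq_bigr => b _; rewrite /marg big_distrl /=.
  by apply: eq_big => // a' /eqP ->.
rewrite /G.
under eq_bigr do rewrite big_distrr big_mkcond /=.
rewrite exchange_big /=; apply: eq_bigr => a _.
rewrite -(marg_pref s m a vp) big_distrl [RHS]big_mkcond /=; apply: eq_bigr => a' _.
case: (eqVneq (prefix m a) (prefix m a')) => [E|ne]; [by rewrite E | by []].
Qed.

Lemma split_lt (g : 'I_N -> R) (m : 'I_N) :
  \prod_(k < N | (k < m.+1)%N) g k = (\prod_(k < N | (k < m)%N) g k) * g m.
Proof.
rewrite (bigD1 m) //= mulrC; congr (_ * _); apply: eq_bigl => k.
by rewrite ltnS [RHS]ltn_neqAle andbC.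
Qed.

Lemma split_ge (g : 'I_N -> R) (m : 'I_N) :
  \prod_(k < N | (m <= k)%N) g k = g m * \prod_(k < N | (m < k)%N) g k.
Proof.
rewrite (bigD1 m) //=; congr (_ * _); apply: eq_bigl => k.
by rewrite [RHS]ltn_neqAle andbC eq_sym.
Qed.

Definition Tm (pistar pol : cpolicy R S A N) (s : S) (Qf : jact A N -> R) (m : nat) :=
  \sum_(a : jact A N) (\prod_(k < N | (k < m)%N) pistar k s (prefix k a) (a k)) *
     (\prod_(k < N | (m <= k)%N) pol k s (prefix k a) (a k)) * Qf a.

Lemma term_diff (pistar pol : cpolicy R S A N) (s : S) (m : 'I_N) (Qf : jact A N -> R) :
  valid_policy pistar ->
  \sum_(b : m.-tuple A) marg pistar s b *
     \sum_(x : A) (\sum_(a : jact A N | (prefix m a == b) && (a m == x))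
        (\prod_(k < N | (m < k)%N) pol k s (prefix k a) (a k)) * Qf a) *
        (pistar m s b x - pol m s b x)
  = Tm pistar pol s Qf m.+1 - Tm pistar pol s Qf m.
Proof.
move=> vp.
set QQ := fun (b : m.-tuple A) (x : A) => \sum_(a : jact A N | (prefix m a == b) && (a m == x))
        (\prod_(k < N | (m < k)%N) pol k s (prefix k a) (a k)) * Qf a.
transitivity (\sum_(b : m.-tuple A) marg pistar s b * \sum_x QQ b x * pistar m s b x -
   \sum_(b : m.-tuple A) marg pistar s b * \sum_x QQ b x * pol m s b x).
  rewrite -sumrB; apply: eq_bigr => b _; rewrite -mulrBr -sumrB; congr (_ * _).
  by apply: eq_bigr => x _; rewrite mulrBr.
rewrite /QQ !term_eq //; congr (_ - _); apply: eq_bigr => a _.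
  by rewrite split_lt mulrA -mulrA -mulrA mulrA.
by rewrite split_ge !mulrA.
Qed.

Lemma TmN (pistar pol : cpolicy R S A N) s Qf :
  Tm pistar pol s Qf N = \sum_a joint pistar s a * Qf a.
Proof.
apply: eq_bigr => a _; rewrite [X in _ * X * _]big_pred0; last first.
  by move=> k; rewrite leqNgt ltn_ord.
by rewrite mulr1 /joint; congr (_ * _); apply: eq_bigl => k; rewrite ltn_ord.
Qed.

Lemma Tm0 (pistar pol : cpolicy R S A N) s Qf :
  Tm pistar pol s Qf 0 = \sum_a joint pol s a * Qf a.
Proof.
by apply: eq_bigr => a _; rewrite big_pred0 // mul1r.
Qed.

End Aux.

Section MDP.
Variables (R : realType) (S A : finType) (N : nat).
Variables (P : S -> jact A N -> S -> R) (r : S -> jact A N -> R) (gamma : R).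
Hypothesis hP : is_kernel P.
Hypothesis hr : forall s a, 0 <= r s a <= 1.
Hypothesis hg0 : 0 <= gamma.
Hypothesis hg1 : gamma < 1.
Local Open Scope classical_set_scope.

Lemma cvg_sumf (I : finType) (f : I -> nat -> R) (l : I -> R) :
  (forall i, f i n @[n --> \oo] --> l i) ->
  (\sum_i f i n) @[n --> \oo] --> \sum_i l i.
Proof.
move=> h.
suff H : forall s : seq I, (\sum_(i <- s) f i n) @[n --> \oo] --> \sum_(i <- s) l i.
  exact: H.
elim=> [|i s IH].
  under eq_fun do rewrite big_nil.
  by rewrite big_nil; exact: cvg_cst.
under eq_fun do rewrite big_cons.
by rewrite big_cons; apply: cvgD.
Qed.

Lemma Ppol_ge0 (pol : cpolicy R S A N) s s' :
  valid_policy pol -> 0 <= Ppol P pol s s'.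
Proof.
move=> vp; apply: sumr_ge0 => a _; apply: mulr_ge0; first exact: joint_ge0.
by case: (hP s a).
Qed.

Lemma Ppol_sum1 (pol : cpolicy R S A N) s :
  valid_policy pol -> \sum_s' Ppol P pol s s' = 1.
Proof.
move=> vp; rewrite /Ppol exchange_big /=.
under eq_bigr do rewrite -big_distrr /= (proj2 (hP _ _)) mulr1.
exact: joint_sum1.
Qed.

Lemma rstep_bd (pol : cpolicy R S A N) :
  valid_policy pol -> forall t s, 0 <= rstep P r pol t s <= 1.
Proof.
move=> vp; elim=> [|t IH] s /=.
  apply/andP; split.
    apply: sumr_ge0 => a _; apply: mulr_ge0; first exact: joint_ge0.
    by case/andP: (hr s a).
  rewrite -(joint_sum1 s vp); apply: ler_sum => a _.
  rewrite -[leRHS]mulr1; apply: ler_wpM2l; first exact: joint_ge0.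
  by case/andP: (hr s a).
apply/andP; split.
  apply: sumr_ge0 => s' _; apply: mulr_ge0; first exact: Ppol_ge0.
  by case/andP: (IH s').
rewrite -(Ppol_sum1 s vp); apply: ler_sum => s' _.
rewrite -[leRHS]mulr1; apply: ler_wpM2l; first exact: Ppol_ge0.
by case/andP: (IH s').
Qed.

Definition Sn (pol : cpolicy R S A N) (s : S) (n : nat) :=
  \sum_(0 <= t < n) gamma ^+ t * rstep P r pol t s.

Lemma Sn_rec (pol : cpolicy R S A N) s n :
  Sn pol s n.+1 = rpol r pol s + gamma * \sum_s' Ppol P pol s s' * Sn pol s' n.
Proof.
rewrite /Sn big_nat_recl //= expr0 mul1r; congr (_ + _).
have -> : \sum_s' Ppol P pol s s' * (\sum_(0 <= t < n) gamma ^+ t * rstep P r pol t s') =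
   \sum_(0 <= t < n) \sum_s' Ppol P pol s s' * (gamma ^+ t * rstep P r pol t s').
  by rewrite exchange_big /=; apply: eq_bigr => s' _; rewrite big_distrr.
rewrite big_distrr /=; apply: eq_bigr => t _.
rewrite exprS -mulrA big_distrr; congr (_ * _); apply: eq_bigr => s' _.
by rewrite mulrCA.
Qed.

Lemma geo_sum n : (\sum_(0 <= t < n) gamma ^+ t) * (1 - gamma) = 1 - gamma ^+ n.
Proof.
elim: n => [|n IH]; first by rewrite big_nil mul0r expr0 subrr.
by rewrite big_nat_recr //= mulrDl IH exprS; ring.
Qed.

Lemma Sn_cvg (pol : cpolicy R S A N) s :
  valid_policy pol -> cvgn (Sn pol s).
Proof.
move=> vp; apply: nondecreasing_is_cvgn.
  move=> n m nm; rewrite /Sn (big_cat_nat (leq0n n) nm) /= lerDl.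
  apply: sumr_ge0 => t _; apply: mulr_ge0; first exact: exprn_ge0.
  by case/andP: (rstep_bd vp t s).
exists (1 - gamma)^-1 => _ [n _ <-].
apply: (@le_trans _ _ (\sum_(0 <= t < n) gamma ^+ t)).
  apply: ler_sum => t _; rewrite -[leRHS]mulr1; apply: ler_wpM2l.
    exact: exprn_ge0.
  by case/andP: (rstep_bd vp t s).
have g1 : 0 < 1 - gamma by rewrite subr_gt0.
rewrite -div1r ler_pdivlMr // geo_sum.
have := exprn_ge0 n hg0; lra.
Qed.

Lemma bellman (pol : cpolicy R S A N) s :
  valid_policy pol ->
  V P r gamma pol s = rpol r pol s + gamma * \sum_s' Ppol P pol s s' * V P r gamma pol s'.
Proof.
move=> vp.
have cv s0 : Sn pol s0 n @[n --> \oo] --> V P r gamma pol s0 by exact: Sn_cvg.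
have h1 : Sn pol s n.+1 @[n --> \oo] --> V P r gamma pol s.
  by rewrite (cvg_shiftS (Sn pol s)).
have h2 : Sn pol s n.+1 @[n --> \oo] -->
    rpol r pol s + gamma * \sum_s' Ppol P pol s s' * V P r gamma pol s'.
  under eq_fun do rewrite Sn_rec.
  apply: cvgD; first exact: cvg_cst.
  apply: cvgMr; apply: cvg_sumf => s'.
  by apply: cvgMr.
exact: (cvg_unique (@Rhausdorff R) h1 h2).
Qed.


Lemma joint_Q (p pol : cpolicy R S A N) s :
  \sum_a joint p s a * Q P r gamma pol s a =
  rpol r p s + gamma * \sum_s' Ppol P p s s' * V P r gamma pol s'.
Proof.
rewrite /Q; under eq_bigr do rewrite mulrDr; rewrite big_split /=; congr (_ + _).
rewrite /Ppol [RHS]big_distrr /=.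
under [RHS]eq_bigr do rewrite big_distrl big_distrr /=.
rewrite [RHS]exchange_big /=; apply: eq_bigr => a _.
rewrite big_distrr big_distrr /=; apply: eq_bigr => s' _; ring.
Qed.

End MDP.

Theorem lemma1 (R : realType) (S A : finType) (N : nat)
  (P : S -> jact A N -> S -> R) (r : S -> jact A N -> R) (gamma : R)
  (pistar pol : cpolicy R S A N) (nu : S -> R) :
  is_kernel P ->
  (forall s a, 0 <= r s a <= 1) ->
  0 <= gamma -> gamma < 1 ->
  optimal P r gamma pistar ->
  stationary P pistar nu ->
  valid_policy pol ->
  J P r gamma nu pistar - J P r gamma nu pol =
  (1 - gamma)^-1 *
  \sum_(m < N) \sum_(s : S) nu s *
     \sum_(b : m.-tuple A) marg pistar s b *
        \sum_(x : A) Qm P r gamma pol s b x * (pistar m s b x - pol m s b x).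
Proof.
move=> hP hr hg0 hg1 [vps _] [nu0 [nu1 nust]] vp.
pose Vs := V P r gamma pistar. pose Vp := V P r gamma pol.
have key s : \sum_(m < N) \sum_(b : m.-tuple A) marg pistar s b *
     \sum_(x : A) Qm P r gamma pol s b x * (pistar m s b x - pol m s b x) =
   (rpol r pistar s + gamma * \sum_s' Ppol P pistar s s' * Vp s') - Vp s.
  rewrite (eq_bigr (fun m : 'I_N => Tm pistar pol s (Q P r gamma pol s) m.+1 -
                                    Tm pistar pol s (Q P r gamma pol s) m)); last first.
    by move=> m _; exact: term_diff.
  rewrite -(big_mkord xpredT (fun m => Tm pistar pol s (Q P r gamma pol s) m.+1 -
                                    Tm pistar pol s (Q P r gamma pol s) m)).
  rewrite telescope_sumr // TmN Tm0 !joint_Q.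
  by rewrite -(bellman hP hr hg0 hg1 s vp).
have stat (D : S -> R) :
    \sum_s nu s * (\sum_s' Ppol P pistar s s' * D s') = \sum_s' nu s' * D s'.
  under eq_bigr do rewrite big_distrr.
  rewrite exchange_big; apply: eq_bigr => s' _ /=.
  by rewrite (nust s') big_distrl; apply: eq_bigr => s _; rewrite mulrA.
have sD : \sum_s nu s * (Vs s - Vp s) = J P r gamma nu pistar - J P r gamma nu pol.
  by rewrite /J -sumrB; apply: eq_bigr => s _; rewrite mulrBr.
have eqD : \sum_s nu s * ((rpol r pistar s + gamma * \sum_s' Ppol P pistar s s' * Vp s') - Vp s)
    = (1 - gamma) * (J P r gamma nu pistar - J P r gamma nu pol).
  transitivity (\sum_s nu s * (Vs s - Vp s) -
      gamma * \sum_s nu s * \sum_s' Ppol P pistar s s' * (Vs s' - Vp s')).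
    rewrite mulr_sumr -sumrB; apply: eq_bigr => s _.
    rewrite /Vs (bellman hP hr hg0 hg1 s vps) -/Vs.
    have -> : \sum_s' Ppol P pistar s s' * (Vs s' - Vp s') =
        \sum_s' Ppol P pistar s s' * Vs s' - \sum_s' Ppol P pistar s s' * Vp s'.
      by rewrite -sumrB; apply: eq_bigr => s' _; rewrite mulrBr.
    ring.
  by rewrite stat sD; ring.
rewrite exchange_big /=.
under eq_bigr do rewrite -big_distrr /= key.
rewrite eqD mulrA mulVf ?mul1r //.
by apply/eqP => h; lra.
Qed.
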